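(* Let $k\in\mathbb Z$ and $c_k:=\frac14-9k^2$. Then $\partial_xv_k=c_kv_{k-1}$ in $(0,\infty)\times\mathbb R$, and for every $t\in\mathbb R$, $$c_k\Lambda_{k-1}(t)=\frac{(1+t^2)^{1/2}}{3}\Big(\big(\tfrac12+3k\big)\Lambda_k(t)-t(1+t^2)\Lambda_k'(t)\Big).$$
   Context: Let $M(a,b,\zeta)=\sum_{n\ge0}\frac{(a)_n}{(b)_n}\frac{\zeta^n}{n!}$ be Kummer's function. For $k\in\mathbb Z$ define $$\Lambda_k(t)=9^{\frac16+k}(1+t^2)^{-\frac14-\frac{3k}2}\Big[\tfrac{\Gamma(1/3)}{\Gamma(1/6-k)}M\big(-\tfrac16-k,\tfrac23,-\tfrac{t^3}{9}\big)-\tfrac{t}{9^{1/3}}\tfrac{\Gamma(-1/3)}{\Gamma(-1/6-k)}M\big(\tfrac16-k,\tfrac43,-\tfrac{t^3}{9}\big)\Big],$$ and for $x>0$, $z\in\mathbb R$, $v_k(x,z):=r^{\frac12+3k}\Lambda_k(t)$ with $r=(z^2+x^{2/3})^{1/2}$, $t=zx^{-1/3}$. *)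

(* Defs.v *)
From Stdlib Require Import Reals Lra ZArith.
From Coquelicot Require Import Coquelicot.
Open Scope R_scope.

Fixpoint poch (a : R) (n : nat) : R :=
  match n with
  | O => 1
  | S m => poch a m * (a + INR m)
  end.

Definition kummerM (a b z : R) : R :=
  Series (fun n => poch a n / poch b n * z ^ n / INR (fact n)).

(* Euler's Gamma function via Gauss' limit formula
   Gamma(x) = lim_n n! n^x / (x (x+1) ... (x+n)),
   valid for x not a non-positive integer (only such x are used below). *)
Definition Gamma (x : R) : R :=
  real (Lim_seq (fun n => INR (fact n) * Rpower (INR n) x / poch x (S n))).

Definition Lambda (k : Z) (t : R) : R :=
  let kr := IZR k in
  Rpower 9 (1/6 + kr) * Rpower (1 + t^2) (-1/4 - 3 * kr / 2) *
  ( Gamma (1/3) / Gamma (1/6 - kr) * kummerM (-1/6 - kr) (2/3) (- t^3 / 9)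
  - t / Rpower 9 (1/3) * (Gamma (-1/3) / Gamma (-1/6 - kr))
      * kummerM (1/6 - kr) (4/3) (- t^3 / 9) ).

Definition v (k : Z) (x z : R) : R :=
  let r := sqrt (z^2 + Rpower x (2/3)) in
  let t := z * Rpower x (-1/3) in
  Rpower r (1/2 + 3 * IZR k) * Lambda k t.

Definition c (k : Z) : R := 1/4 - 9 * (IZR k)^2.

(* Main.v *)
Require Import Defs.
From Stdlib Require Import Reals Lra Lia ZArith.
From Coquelicot Require Import Coquelicot.
Open Scope R_scope.

Lemma poch_nz x n : (forall j, x + INR j <> 0) -> poch x n <> 0.
Proof.
  intros H; induction n; simpl. lra.
  apply Rmult_integral_contrapositive_currified; auto.
Qed.

Lemma poch_shift a n : poch a (S n) = a * poch (a+1) n.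
Proof.
  induction n. simpl; ring.
  change (poch a (S (S n))) with (poch a (S n) * (a + INR (S n))).
  rewrite IHn. cbn [poch]. rewrite S_INR. ring.
Qed.

Lemma ln_bounds a b : 0 < a -> 0 < b -> (b-a)/b <= ln b - ln a <= (b-a)/a.
Proof.
  intros Ha Hb. split.
  - assert (H := exp_ineq1_le (a/b - 1)).
    assert (H2: ln (a/b) <= a/b - 1).
    { rewrite <- (ln_exp (a/b-1)). apply ln_le. apply Rdiv_lt_0_compat; lra.
      lra. }
    rewrite ln_div in H2 by lra.
    replace ((b-a)/b) with (-(a/b-1)) by (field; lra). lra.
  - assert (H := exp_ineq1_le (b/a - 1)).
    assert (H2: ln (b/a) <= b/a - 1).
    { rewrite <- (ln_exp (b/a-1)). apply ln_le. apply Rdiv_lt_0_compat; lra.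
      lra. }
    rewrite ln_div in H2 by lra.
    replace ((b-a)/a) with ((b/a-1)) by (field; lra). lra.
Qed.

Fixpoint psum (f : nat -> R) (m : nat) : R :=
  match m with O => 0 | S m => psum f m + f m end.

Lemma psum_tele f m : psum (fun j => f j - f (S j)) m = f O - f m.
Proof. induction m; simpl. ring. rewrite IHm. ring. Qed.

Lemma psum_le f g m : (forall j, f j <= g j) -> psum f m <= psum g m.
Proof. intros H; induction m; simpl. lra. specialize (H m). lra. Qed.

Lemma psum_minus f g m : psum (fun j => f j - g j) m = psum f m - psum g m.
Proof. induction m; simpl. ring. rewrite IHm. ring. Qed.

Definition gseq x n := INR (fact n) * Rpower (INR n) x / poch x (S n).

Lemma Gamma_eq x : Gamma x = real (Lim_seq (gseq x)).
Proof. reflexivity. Qed.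

Lemma est x a u w : 2 * Rabs x + 2 < a ->
  1/(a+1) <= u <= 1/a -> x/(x+a+1) <= w <= x/(a+1) ->
  Rabs (x*u - w) <= (Rabs x + 2*x^2) * (1/a - 1/(a+1)).
Proof.
  intros Ha Hu Hw.
  assert (Hx: Rabs x < a/2) by lra.
  assert (Hp: 0 < a) by (pose proof (Rabs_pos x); lra).
  assert (Hxa: a/2 < x + a + 1) by (destruct (Rabs_def2 x (a/2)); lra).
  assert (E1: Rabs (x * (u - 1/(a+1))) <= Rabs x * (1/a - 1/(a+1))).
  { rewrite Rabs_mult. apply Rmult_le_compat_l. apply Rabs_pos.
    rewrite Rabs_right by lra. lra. }
  assert (E2: x/(a+1) - x/(x+a+1) = x^2/((a+1)*(x+a+1))) by (field; lra).
  assert (E3: x^2/((a+1)*(x+a+1)) <= 2*x^2 * (1/a - 1/(a+1))).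
  { replace (1/a - 1/(a+1)) with (1/(a*(a+1))) by (field; lra).
    unfold Rdiv. rewrite !Rmult_1_l.
    replace (2*x^2 * / (a*(a+1))) with (x^2 * / ((a/2)*(a+1))) by (field; lra).
    apply Rmult_le_compat_l. apply pow2_ge_0.
    apply Rinv_le_contravar. apply Rmult_lt_0_compat; lra.
    nra. }
  replace (x*u - w) with (x * (u - 1/(a+1)) + (x/(a+1) - w)) by (field; lra).
  eapply Rle_trans. apply Rabs_triang.
  rewrite (Rabs_right (x/(a+1) - w)) by lra.
  lra.
Qed.

Lemma Rpower_pos a y : 0 < Rpower a y.
Proof. apply exp_pos. Qed.

Lemma psum_ext f g m : (forall j, f j = g j) -> psum f m = psum g m.
Proof. intros H; induction m; simpl; auto. rewrite IHm, H; auto. Qed.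

Lemma neg_abs_le e : - Rabs e <= e.
Proof. pose proof (Rle_abs (-e)). rewrite Rabs_Ropp in H. lra. Qed.

Lemma gseq_nz x n : (forall j, x + INR j <> 0) -> gseq x n <> 0.
Proof.
  intros H. unfold gseq, Rdiv.
  apply Rmult_integral_contrapositive_currified.
  apply Rmult_integral_contrapositive_currified. apply INR_fact_neq_0.
  apply Rgt_not_eq, Rpower_pos.
  apply Rinv_neq_0_compat, poch_nz; auto.
Qed.

Lemma gseq_conv x : (forall j, x + INR j <> 0) ->
  exists L, L <> 0 /\ is_lim_seq (gseq x) L.
Proof.
  intros Hx.
  destruct (INR_unbounded (2*Rabs x + 2)) as [N HN].
  pose proof (Rabs_pos x) as Hax.
  set (r := fun n => INR (S n) * Rpower (INR (S n)) x / (Rpower (INR n) x * (x + INR (S n)))).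
  set (E := fun n:nat => x * (ln (INR (S n)) - ln (INR n)) - (ln (x + INR (S n)) - ln (INR (S n)))).
  set (D := Rabs x + 2 * x^2).
  assert (HD : 0 <= D) by (unfold D; pose proof (pow2_ge_0 x); lra).
  assert (Hstep: forall n, gseq x (S n) = gseq x n * r n).
  { intro n. unfold gseq, r. rewrite fact_simpl, mult_INR.
    change (poch x (S (S n))) with (poch x (S n) * (x + INR (S n))).
    field. repeat split.
    - apply Hx.
    - apply Rgt_not_eq, Rpower_pos.
    - apply poch_nz; auto. }
  assert (Hn: forall n, (N <= n)%nat -> 2*Rabs x + 2 < INR n).
  { intros n Hn. apply le_INR in Hn. lra. }
  assert (HrE: forall n, (N <= n)%nat -> r n = exp (E n)).
  { intros n Hn'. specialize (Hn n Hn').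
    assert (h1: 0 < INR n) by lra.
    assert (h2: 0 < INR (S n)) by (rewrite S_INR; lra).
    assert (h3: 0 < x + INR (S n)) by (rewrite S_INR; destruct (Rabs_def2 x (INR n)); lra).
    unfold E, r, Rpower.
    replace (x * (ln (INR (S n)) - ln (INR n)) - (ln (x + INR (S n)) - ln (INR (S n))))
      with (ln (INR (S n)) + x * ln (INR (S n)) + - (x * ln (INR n)) + - ln (x + INR (S n)))
      by ring.
    rewrite !exp_plus, !exp_Ropp, !exp_ln by lra.
    field. split; apply Rgt_not_eq; auto. apply exp_pos. }
  assert (HEb: forall n, (N<=n)%nat -> Rabs (E n) <= D*(1/INR n - 1/(INR n + 1))).
  { intros n Hn'. specialize (Hn n Hn').
    assert (h1: 0 < INR n) by lra.
    assert (h3: 0 < x + INR n + 1) by (destruct (Rabs_def2 x (INR n)); lra).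
    unfold E, D. rewrite S_INR. apply est; auto.
    - pose proof (ln_bounds (INR n) (INR n + 1) h1 ltac:(lra)).
      replace (INR n + 1 - INR n) with 1 in H by ring. lra.
    - pose proof (ln_bounds (INR n + 1) (x + (INR n + 1)) ltac:(lra) ltac:(lra)).
      replace (x + (INR n + 1) - (INR n + 1)) with x in H by ring.
      replace (x + INR n + 1) with (x + (INR n + 1)) by ring. lra. }
  set (S := fun m => psum (fun j => E (j + N)%nat) m).
  assert (Hh: forall m, gseq x (m+N) = gseq x N * exp (S m)).
  { induction m.
    - unfold S; simpl. rewrite exp_0. ring.
    - change (S (Datatypes.S m)) with (S m + E (m+N)%nat).
      change (Datatypes.S m + N)%nat with (Datatypes.S (m + N)).
      rewrite Hstep, IHm, HrE by lia. rewrite exp_plus. ring. }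
  set (f := fun j:nat => D / INR (j + N)).
  assert (HN0: 0 < INR N) by lra.
  assert (Hf: forall j, 0 <= f j - f (Datatypes.S j)).
  { intro j. unfold f. unfold Rdiv.
    assert (0 < INR (j+N)) by (rewrite plus_INR; pose proof (pos_INR j); lra).
    rewrite <- Rmult_minus_distr_l. apply Rmult_le_pos; auto.
    change (Datatypes.S j + N)%nat with (Datatypes.S (j+N)). rewrite S_INR.
    assert (/ (INR (j+N) + 1) <= / INR (j+N)) by (apply Rinv_le_contravar; lra). lra. }
  assert (Hf0: forall j, 0 <= f j).
  { intro j. unfold f. apply Rmult_le_pos; auto. apply Rlt_le, Rinv_0_lt_compat.
    rewrite plus_INR; pose proof (pos_INR j); lra. }
  assert (HET: forall j, Rabs (E (j+N)%nat) <= f j - f (Datatypes.S j)).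
  { intro j. eapply Rle_trans. apply HEb. lia.
    unfold f. change (Datatypes.S j + N)%nat with (Datatypes.S (j+N)). rewrite S_INR.
    right. field. split; apply Rgt_not_eq. 
    assert (0 < INR (j+N)) by (rewrite plus_INR; pose proof (pos_INR j); lra). lra.
    rewrite plus_INR; pose proof (pos_INR j); lra. }
  set (W := psum (fun j => E (j+N)%nat + (f j - f (Datatypes.S j)))).
  set (V := psum (fun j => f j - f (Datatypes.S j))).
  assert (eW: ex_finite_lim_seq W).
  { apply ex_finite_lim_seq_incr with (M := 2 * f O).
    - intro n. unfold W. simpl. pose proof (HET n). pose proof (neg_abs_le (E (n+N)%nat)). lra.
    - intro n. unfold W. eapply Rle_trans.
      apply psum_le with (g := fun j => 2 * f j - 2 * f (Datatypes.S j)).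
      { intro j. pose proof (HET j). pose proof (Rle_abs (E (j+N)%nat)). lra. }
      rewrite (psum_tele (fun j => 2 * f j)). pose proof (Hf0 n). lra. }
  assert (eV: ex_finite_lim_seq V).
  { apply ex_finite_lim_seq_incr with (M := f O).
    - intro n. unfold V. simpl. pose proof (Hf n). lra.
    - intro n. unfold V. rewrite psum_tele. pose proof (Hf0 n). lra. }
  destruct eW as [lW HW]. destruct eV as [lV HV].
  assert (HS: is_lim_seq S (lW - lV)).
  { eapply is_lim_seq_ext. 2: apply (is_lim_seq_minus' _ _ _ _ HW HV).
    intro m. unfold W, V, S. rewrite <- psum_minus. apply psum_ext. intro j. ring. }
  exists (gseq x N * exp (lW - lV)). split.
  - apply Rmult_integral_contrapositive_currified. apply gseq_nz; auto.
    apply Rgt_not_eq, exp_pos.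
  - apply (is_lim_seq_incr_n _ N).
    eapply is_lim_seq_ext. intro m. symmetry. apply Hh.
    apply is_lim_seq_mult'. apply is_lim_seq_const.
    apply (is_lim_seq_continuous exp S). apply derivable_continuous_pt, derivable_pt_exp. auto.
Qed.

Lemma lim_w x : is_lim_seq (fun n => INR (S n) / (x + 1 + INR (S n))) 1.
Proof.
  assert (H1: is_lim_seq (fun n => / INR (S n)) 0).
  { pose proof (proj1 (is_lim_seq_incr_1 INR p_infty) is_lim_seq_INR) as H.
    apply (is_lim_seq_inv _ _ H). discriminate. }
  assert (H2: is_lim_seq (fun n => 1 + (x+1) * / INR (S n)) (1 + (x+1)*0)).
  { apply is_lim_seq_plus'. apply is_lim_seq_const.
    apply is_lim_seq_mult'. apply is_lim_seq_const. auto. }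
  replace (1 + (x+1)*0) with 1 in H2 by ring.
  pose proof (is_lim_seq_inv _ _ H2 ltac:(injection; lra)) as H3.
  change (is_lim_seq (fun n => / (1 + (x+1) * / INR (S n))) (Finite (/1))) in H3.
  rewrite Rinv_1 in H3.
  apply (is_lim_seq_ext (fun n => / (1 + (x+1) * / INR (S n)))); [|exact H3].
  intro n. assert (0 < INR (S n)) by (apply lt_0_INR; lia).
  assert (E: 1 + (x+1) * / INR (S n) = (x + 1 + INR (S n)) * / INR (S n)) by (field; lra).
  rewrite E, Rinv_mult, Rinv_inv. unfold Rdiv. ring.
Qed.

Lemma Gamma_rec x : (forall j, x + INR j <> 0) -> Gamma (x+1) = x * Gamma x.
Proof.
  intros Hx. destruct (gseq_conv x Hx) as [L [_ HL]].
  assert (Hx0: x <> 0) by (specialize (Hx 0%nat); simpl in Hx; lra).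
  assert (Hid: forall n, gseq (x+1) (S n) = (x * gseq x (S n)) * (INR (S n) / (x + 1 + INR (S n)))).
  { intro n. unfold gseq.
    assert (Hp: 0 < INR (S n)) by (apply lt_0_INR; lia).
    rewrite (poch_shift x (S n)).
    change (poch (x+1) (S (S n))) with (poch (x+1) (S n) * (x + 1 + INR (S n))).
    rewrite Rpower_plus, Rpower_1 by auto.
    assert (poch (x+1) (S n) <> 0).
    { apply poch_nz. intro j. replace (x + 1 + INR j) with (x + INR (S j)) by (rewrite S_INR; ring). auto. }
    assert (x + 1 + INR (S n) <> 0).
    { replace (x + 1 + INR (S n)) with (x + INR (S (S n))) by (rewrite (S_INR (S n)); ring). auto. }
    field. repeat split; auto. }
  assert (H: is_lim_seq (gseq (x+1)) (x*L*1)).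
  { apply is_lim_seq_incr_1.
    apply (is_lim_seq_ext (fun n => (x * gseq x (S n)) * (INR (S n) / (x + 1 + INR (S n))))).
    intro n; symmetry; apply Hid.
    apply is_lim_seq_mult'. apply is_lim_seq_mult'. apply is_lim_seq_const.
    apply (is_lim_seq_incr_1 (gseq x)). auto. apply lim_w. }
  rewrite !Gamma_eq, (is_lim_seq_unique _ _ H), (is_lim_seq_unique _ _ HL). simpl. ring.
Qed.

Lemma Gamma_nz x : (forall j, x + INR j <> 0) -> Gamma x <> 0.
Proof.
  intros Hx. destruct (gseq_conv x Hx) as [L [HL0 HL]].
  rewrite Gamma_eq, (is_lim_seq_unique _ _ HL). simpl. auto.
Qed.

Definition Kc a b n := poch a n / poch b n / INR (fact n).

Lemma kummer_PS a b z : kummerM a b z = PSeries (Kc a b) z.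
Proof.
  unfold kummerM, PSeries. apply Series_ext. intro n.
  unfold Kc, Rdiv. ring.
Qed.

Lemma poch_pos b n : 0 < b -> 0 < poch b n.
Proof. intros Hb; induction n; simpl. lra. apply Rmult_lt_0_compat; auto. pose proof (pos_INR n); lra. Qed.

Lemma Kc_nz a b n : (forall j, a + INR j <> 0) -> 0 < b -> Kc a b n <> 0.
Proof.
  intros Ha Hb. unfold Kc, Rdiv.
  apply Rmult_integral_contrapositive_currified.
  apply Rmult_integral_contrapositive_currified. apply poch_nz; auto.
  apply Rinv_neq_0_compat, Rgt_not_eq, poch_pos; auto.
  apply Rinv_neq_0_compat, INR_fact_neq_0.
Qed.

Lemma CV_inf a b : (forall j, a + INR j <> 0) -> 0 < b -> CV_radius (Kc a b) = p_infty.
Proof.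
  intros Ha Hb. apply CV_radius_infinite_DAlembert.
  intro n; apply Kc_nz; auto.
  assert (H1: is_lim_seq (fun n => / INR (S n)) 0).
  { pose proof (proj1 (is_lim_seq_incr_1 INR p_infty) is_lim_seq_INR) as H.
    apply (is_lim_seq_inv _ _ H). discriminate. }
  assert (H2: is_lim_seq (fun n => / (b + INR n)) 0).
  { assert (H: is_lim_seq (fun n => b + INR n) p_infty).
    { apply (is_lim_seq_plus _ _ b p_infty). apply is_lim_seq_const. apply is_lim_seq_INR.
      reflexivity. }
    apply (is_lim_seq_inv _ _ H). discriminate. }
  assert (H3: is_lim_seq (fun n => (1 + (a - b) * / (b + INR n)) * / INR (S n)) ((1 + (a-b)*0)*0)).
  { apply is_lim_seq_mult'; auto. apply is_lim_seq_plus'. apply is_lim_seq_const.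
    apply is_lim_seq_mult'; auto. apply is_lim_seq_const. }
  replace ((1 + (a-b)*0)*0) with 0 in H3 by ring.
  pose proof (is_lim_seq_abs _ _ H3) as H4. simpl in H4. rewrite Rabs_R0 in H4.
  apply (is_lim_seq_ext (fun n => Rabs ((1 + (a - b) * / (b + INR n)) * / INR (S n)))); auto.
  intro n. f_equal. unfold Kc.
  change (fact (S n)) with (S n * fact n)%nat. rewrite mult_INR.
  change (poch a (S n)) with (poch a n * (a + INR n)).
  change (poch b (S n)) with (poch b n * (b + INR n)).
  pose proof (pos_INR n). assert (0 < INR (S n)) by (apply lt_0_INR; lia).
  pose proof (poch_pos b n Hb). pose proof (poch_nz a n Ha). pose proof (INR_fact_neq_0 n).
  field. repeat split; try lra; auto.
Qed.

Definition Md a b z := PSeries (PS_derive (Kc a b)) z.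

Lemma M_derive a b z : (forall j, a + INR j <> 0) -> 0 < b ->
  is_derive (kummerM a b) z (Md a b z).
Proof.
  intros Ha Hb. apply (is_derive_ext (PSeries (Kc a b))).
  intro t. symmetry. apply kummer_PS.
  apply is_derive_PSeries. rewrite CV_inf; auto. exact I.
Qed.

Lemma contig a b z : (forall j, a + INR j <> 0) -> 0 < b ->
  a * kummerM (a+1) b z = a * kummerM a b z + z * Md a b z.
Proof.
  intros Ha Hb.
  assert (Ha1: forall j, a + 1 + INR j <> 0).
  { intro j. replace (a + 1 + INR j) with (a + INR (S j)) by (rewrite S_INR; ring). auto. }
  assert (E0: ex_pseries (Kc a b) z) by (apply CV_radius_inside; rewrite CV_inf; auto; exact I).
  assert (E1: ex_pseries (Kc (a+1) b) z) by (apply CV_radius_inside; rewrite CV_inf; auto; exact I).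
  rewrite !kummer_PS. unfold Md. rewrite <- PSeries_incr_1.
  assert (H: a * PSeries (Kc (a + 1) b) z - a * PSeries (Kc a b) z
            = PSeries (PS_incr_1 (PS_derive (Kc a b))) z).
  { rewrite <- !PSeries_scal. rewrite <- PSeries_minus.
    2,3: apply ex_pseries_scal; auto; apply Rmult_comm.
    apply PSeries_ext. intro n. unfold PS_minus, PS_scal, PS_plus, PS_opp, PS_incr_1, PS_derive.
    destruct n.
    - change (a * Kc (a+1) b 0 + - (a * Kc a b 0) = 0). unfold Kc. simpl. field.
    - change (a * Kc (a+1) b (S n) + - (a * Kc a b (S n)) = INR (S n) * Kc a b (S n)).
      unfold Kc.
      replace (a * (poch (a+1) (S n) / poch b (S n) / INR (fact (S n)))) with
        (a * poch (a+1) (S n) / poch b (S n) / INR (fact (S n))) by (unfold Rdiv; ring).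
      rewrite <- poch_shift.
      change (poch a (S (S n))) with (poch a (S n) * (a + INR (S n))).
      pose proof (poch_pos b (S n) Hb). pose proof (INR_fact_neq_0 (S n)).
      field. split; auto; lra. }
  lra.
Qed.

Lemma is_derive_eq (f : R -> R) (x l l' : R) : is_derive f x l -> l = l' -> is_derive f x l'.
Proof. intros H ->; auto. Qed.

Lemma is_derive_comp_R (f g : R -> R) (x df dg : R) : is_derive f (g x) df -> is_derive g x dg ->
  is_derive (fun y => f (g y)) x (dg * df).
Proof. intros; apply (is_derive_comp f g x df dg); auto. Qed.

Lemma Rpower_derive (f : R -> R) (x df e : R) : is_derive f x df -> 0 < f x ->
  is_derive (fun y => Rpower (f y) e) x (e * df / f x * Rpower (f x) e).
Proof.
  intros Hf Hp. unfold Rpower.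
  assert (H1: is_derive (fun y => e * ln (f y)) x (e * (df / f x))).
  { apply is_derive_scal.
    eapply is_derive_eq. apply (is_derive_comp_R ln f x (/ f x) df).
    apply is_derive_ln; auto. auto. unfold Rdiv. reflexivity. }
  eapply is_derive_eq. apply (is_derive_comp_R exp (fun y => e * ln (f y)) x (exp (e * ln (f x))) (e * (df / f x))).
  apply is_derive_exp. exact H1. unfold Rdiv. ring.
Qed.

Lemma test (t:R) : is_derive (fun t => 1 + t^2) t (2*t).
Proof. auto_derive. auto. ring. Qed.

Lemma nonpole (k : Z) (q : R) : (q = 1/6 \/ q = -1/6) -> forall j, q - IZR k + INR j <> 0.
Proof.
  intros Hq j H. rewrite INR_IZR_INZ in H.
  destruct Hq as [-> | ->].
  - assert (IZR (1 + 6*(Z.of_nat j - k)) = 0).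
    { rewrite plus_IZR, mult_IZR, minus_IZR. lra. }
    apply eq_IZR_R0 in H0. lia.
  - assert (IZR (-1 + 6*(Z.of_nat j - k)) = 0).
    { rewrite plus_IZR, mult_IZR, minus_IZR. lra. }
    apply eq_IZR_R0 in H0. lia.
Qed.

Definition LD (k : Z) (t : R) : R :=
  let kr := IZR k in
  let e := -1/4 - 3*kr/2 in
  let s := - t^3/9 in
  let ds := - t^2/3 in
  let A := Gamma (1/3) / Gamma (1/6 - kr) in
  let B := Gamma (-1/3) / Gamma (-1/6 - kr) in
  let c3 := Rpower 9 (1/3) in
  let F := A * kummerM (-1/6-kr) (2/3) s - t / c3 * B * kummerM (1/6-kr) (4/3) s in
  let dF := A * (ds * Md (-1/6-kr) (2/3) s)
            - (1/c3 * B * kummerM (1/6-kr) (4/3) s + t/c3*B*(ds * Md (1/6-kr) (4/3) s)) in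
  Rpower 9 (1/6+kr) * ((e*(2*t)/(1+t^2)*Rpower (1+t^2) e) * F + Rpower (1+t^2) e * dF).

Lemma Md_ok k (q b : R) z : (q = 1/6 \/ q = -1/6) -> 0 < b ->
  is_derive (fun x => kummerM (q - IZR k) b x) z (Md (q - IZR k) b z).
Proof. intros Hq Hb. apply M_derive; auto. apply nonpole; auto. Qed.

Lemma Rpow_id_derive y e : 0 < y -> is_derive (fun x => Rpower x e) y (e / y * Rpower y e).
Proof.
  intros Hy. eapply is_derive_eq. apply (Rpower_derive (fun x => x) y 1 e).
  auto_derive; auto. auto. field. lra.
Qed.

Lemma Lambda_derive k t : is_derive (Lambda k) t (LD k t).
Proof.
  assert (Ht: 0 < 1 + t*(t*1)) by nra.
  assert (D1 := Md_ok k (-1/6) (2/3) (- (t * (t * (t * 1))) * / 9) ltac:(right; reflexivity) ltac:(lra)).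
  assert (D2 := Md_ok k (1/6) (4/3) (- (t * (t * (t * 1))) * / 9) ltac:(left; reflexivity) ltac:(lra)).
  assert (D0 := Rpow_id_derive _ (-1 / 4 - 3 * IZR k / 2) Ht).
  unfold Lambda. auto_derive.
  - repeat split; eexists; eauto.
  - assert (E0: Derive (fun x : R => Rpower x (-1 / 4 - 3 * IZR k / 2)) (1 + t * (t * 1))
       = (-1 / 4 - 3 * IZR k / 2) / (1 + t * (t * 1)) * Rpower (1 + t * (t * 1)) (-1 / 4 - 3 * IZR k / 2))
      by (apply is_derive_unique; exact D0).
    assert (E1: Derive (fun x : R => kummerM (-1 / 6 - IZR k) (2 / 3) x) (- (t * (t * (t * 1))) * / 9)
       = Md (-1 / 6 - IZR k) (2 / 3) (- (t * (t * (t * 1))) * / 9))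
      by (apply is_derive_unique; exact D1).
    assert (E2: Derive (fun x : R => kummerM (1 / 6 - IZR k) (4 / 3) x) (- (t * (t * (t * 1))) * / 9)
       = Md (1 / 6 - IZR k) (4 / 3) (- (t * (t * (t * 1))) * / 9))
      by (apply is_derive_unique; exact D2).
    rewrite E0, E1, E2.
    unfold LD. cbv zeta.
    replace (t * (t * (t * 1))) with (t^3) by ring.
    replace (t * (t * 1)) with (t^2) by ring.
    assert (G1: Gamma (-1/6 - IZR k) <> 0) by (apply Gamma_nz, nonpole; right; reflexivity).
    assert (G2: Gamma (1/6 - IZR k) <> 0) by (apply Gamma_nz, nonpole; left; reflexivity).
    assert (C3: Rpower 9 (1/3) <> 0) by (apply Rgt_not_eq, Rpower_pos).
    assert (T2: 1 + t^2 <> 0) by nra.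
    unfold Rdiv in *. field. auto.
Qed.

Lemma contig' (k : Z) (q b z : R) : (q = 1/6 \/ q = -1/6) -> 0 < b ->
  kummerM (q - IZR k + 1) b z = ((q - IZR k) * kummerM (q - IZR k) b z + z * Md (q - IZR k) b z) / (q - IZR k).
Proof.
  intros Hq Hb. assert (H0: q - IZR k <> 0).
  { pose proof (nonpole k q Hq 0). simpl in H. lra. }
  rewrite <- contig; auto. field; auto. apply nonpole; auto.
Qed.

Lemma Gamma_rec' (k : Z) (q : R) : (q = 1/6 \/ q = -1/6) ->
  Gamma (q - IZR k + 1) = (q - IZR k) * Gamma (q - IZR k).
Proof. intros Hq. apply Gamma_rec, nonpole; auto. Qed.

Lemma ident k t : c k * Lambda (k-1)%Z t =
  sqrt (1 + t^2) / 3 * ((1/2 + 3 * IZR k) * Lambda k t - t * (1 + t^2) * LD k t).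
Proof.
  unfold Lambda, LD, c. cbv zeta. rewrite minus_IZR.
  assert (T0: 0 < 1 + t^2) by nra.
  replace (1/6 + (IZR k - IZR 1)) with ((1/6 + IZR k) + Ropp 1) by (simpl; ring).
  rewrite Rpower_plus, Rpower_Ropp, Rpower_1 by lra.
  replace (-1/4 - 3 * (IZR k - IZR 1) / 2) with ((-1/4 - 3 * IZR k / 2) + (1 + /2)) by (simpl; field).
  rewrite (Rpower_plus _ (1 + /2)), (Rpower_plus 1 (/2)), (Rpower_1 (1+t^2)), Rpower_sqrt by lra.
  replace (1/6 - (IZR k - IZR 1)) with (1/6 - IZR k + 1) by (simpl; ring).
  replace (-1/6 - (IZR k - IZR 1)) with (-1/6 - IZR k + 1) by (simpl; ring).
  rewrite (Gamma_rec' k (1/6)), (Gamma_rec' k (-1/6)) by auto.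
  rewrite (contig' k (1/6)), (contig' k (-1/6)) by (auto; lra).
  assert (G1: Gamma (-1/6 - IZR k) <> 0) by (apply Gamma_nz, nonpole; right; reflexivity).
  assert (G2: Gamma (1/6 - IZR k) <> 0) by (apply Gamma_nz, nonpole; left; reflexivity).
  assert (C3: Rpower 9 (1/3) <> 0) by (apply Rgt_not_eq, Rpower_pos).
  assert (H1: 1/6 - IZR k <> 0) by (pose proof (nonpole k (1/6) ltac:(auto) 0); simpl in H; lra).
  assert (H2: -1/6 - IZR k <> 0) by (pose proof (nonpole k (-1/6) ltac:(auto) 0); simpl in H; lra).
  field. repeat split; auto; lra.
Qed.

Lemma part1 k x z : 0 < x -> is_derive (fun x' => v k x' z) x (c k * v (k - 1)%Z x z).
Proof.
  intros Hx. unfold v.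
  assert (Hp: 0 < z * (z * 1) + Rpower x (2 / 3)) by (pose proof (Rpower_pos x (2/3)); nra).
  assert (Hs: 0 < sqrt (z * (z * 1) + Rpower x (2 / 3))) by (apply sqrt_lt_R0; auto).
  set (p := 1 / 2 + 3 * IZR k).
  set (t := z * Rpower x (-1 / 3)).
  assert (DL: is_derive (Lambda k) t (Derive (Lambda k) t)).
  { apply Derive_correct. eexists. apply Lambda_derive. }
  assert (D1 := Rpow_id_derive _ (2/3) Hx).
  assert (D2 := Rpow_id_derive _ (-1/3) Hx).
  assert (D3 := Rpow_id_derive _ p Hs).
  auto_derive.
  - repeat split; auto; eexists; eauto.
  - assert (E1: Derive (fun x0 : R => Rpower x0 (2 / 3)) x = 2/3/x * Rpower x (2/3))
      by (apply is_derive_unique; exact D1).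
    assert (E2: Derive (fun x0 : R => Rpower x0 (-1 / 3)) x = -1/3/x * Rpower x (-1/3))
      by (apply is_derive_unique; exact D2).
    assert (E3: Derive (fun x0 : R => Rpower x0 p) (sqrt (z * (z * 1) + Rpower x (2 / 3)))
       = p / sqrt (z * (z * 1) + Rpower x (2 / 3)) * Rpower (sqrt (z * (z * 1) + Rpower x (2 / 3))) p)
      by (apply is_derive_unique; exact D3).
    assert (E4: Derive (fun x0 : R => Lambda k x0) t = Derive (Lambda k) t) by reflexivity.
    rewrite E1, E2, E3. change (z * Rpower x (-1 / 3)) with t. rewrite E4.
    rewrite minus_IZR.
    assert (Hc: c k * (Rpower (sqrt (z ^ 2 + Rpower x (2 / 3))) (1 / 2 + 3 * (IZR k - IZR 1)) *
                Lambda (k - 1) t) =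
              Rpower (sqrt (z ^ 2 + Rpower x (2 / 3))) (1 / 2 + 3 * (IZR k - IZR 1)) *
                (c k * Lambda (k - 1) t)) by ring.
    rewrite Hc, ident.
    rewrite <- (is_derive_unique _ _ _ (Lambda_derive k t)).
    replace (1 / 2 + 3 * (IZR k - IZR 1)) with (p + - INR 3) by (unfold p; simpl; ring).
    rewrite Rpower_plus, Rpower_Ropp.
    replace (z^2) with (z * (z*1)) by ring.
    rewrite Rpower_pow by auto.
    set (X := Rpower x (1/3)).
    assert (HX: 0 < X) by apply Rpower_pos.
    assert (X2: Rpower x (2/3) = X * X).
    { unfold X. rewrite <- Rpower_plus. f_equal. field. }
    assert (Xm: Rpower x (-1/3) = / X).
    { unfold X. rewrite <- Rpower_Ropp. f_equal. field. }
    assert (X3: x = X * X * X).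
    { unfold X. rewrite <- !Rpower_plus. replace (1/3 + 1/3 + 1/3) with 1 by field.
      rewrite Rpower_1; auto. }
    unfold t. rewrite X2, Xm. rewrite X2 in Hs.
    set (r := sqrt (z * (z * 1) + X * X)) in *.
    assert (R2: r * r = z * (z * 1) + X * X) by (unfold r; apply sqrt_sqrt; nra).
    assert (E5: 1 + (z * / X)^2 = (r / X)^2).
    { replace ((r/X)^2) with ((r*r)/(X*X)) by (field; lra). rewrite R2. field; lra. }
    rewrite E5, sqrt_pow2 by (apply Rlt_le, Rdiv_lt_0_compat; auto).
    rewrite X3.
    clearbody X r. 
    assert (0 < Rpower r p) by apply Rpower_pos.
    fold p. clearbody p. field. lra.
Qed.

Theorem lemma2p14 (k : Z) :
  (forall x z : R, 0 < x ->
     is_derive (fun x' => v k x' z) x (c k * v (k - 1)%Z x z)) /\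
  (forall t : R,
     ex_derive (Lambda k) t /\
     c k * Lambda (k - 1)%Z t =
       sqrt (1 + t^2) / 3 *
       ((1/2 + 3 * IZR k) * Lambda k t - t * (1 + t^2) * Derive (Lambda k) t)).
Proof.
  split.
  - intros x z Hx. apply part1; auto.
  - intros t. split.
    + eexists. apply Lambda_derive.
    + rewrite (is_derive_unique _ _ _ (Lambda_derive k t)). apply ident.
Qed.
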